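(* Let $1\le d<n$ and $\underline j=j_1\cdots j_d\in I(d,n)$. Write $$\nu^b_{\mathfrak C_{\mathrm{right}}}(P_{\underline j}/P_{\underline i_{\min}})=(a_{1,n-d},\dots,a_{1,1},a_{2,n-d},\dots,a_{2,1},\dots,a_{d,n-d},\dots,a_{d,1}).$$ Then for each $k=1,\dots,d$ one has $a_{k,1}=\cdots=a_{k,j_k-k}=1$, and all other coordinates are $0$.
   Context: $\mathbb K$ is algebraically closed of characteristic $0$. $\mathrm{Gr}_{d,n}\subseteq\mathbb P(\Lambda^d\mathbb K^n)$ is the Grassmannian in its Plücker embedding; $e_{\underline i}=e_{i_1}\wedge\cdots\wedge e_{i_d}$ for $\underline i\in I(d,n)$ (the set of increasing $d$-subsets of $\{1,\dots,n\}$), $P_{\underline i}$ the dual basis (Plücker coordinates), $\underline i_{\min}=12\cdots d$, $r=d(n-d)$, and $f_k=E_{k+1,k}\in\mathfrak{sl}_n(\mathbb K)$. The chain $\mathfrak C_{\mathrm{right}}$ of Schubert varieties has birational sequence $(\alpha_{n-d},\dots,\alpha_1,\alpha_{n-d+1},\dots,\alpha_2,\dots,\alpha_{n-1},\dots,\alpha_d)=:(\alpha_{\ell_r},\dots,\alpha_{\ell_1})$ ($d$ blocks, the $k$-th block running from $\alpha_{n-d+k-1}$ down to $\alpha_k$). The map $m:\mathbb A^r\to\mathrm{Gr}_{d,n}$, $(t_r,\dots,t_1)\mapsto\exp(t_rf_{\ell_r})\cdots\exp(t_1f_{\ell_1})\cdot e_{\underline i_{\min}}$ is birational, giving $\mathbb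 K(\mathrm{Gr}_{d,n})\cong\mathbb K(t_r,\dots,t_1)$. On $\mathbb N^r$ (exponents $(a_r,\dots,a_1)$ of $t_r^{a_r}\cdots t_1^{a_1}$) let $>_{\mathrm{grlex}}$ compare first total degree, then $a_r$, then $a_{r-1}$, etc. For a nonzero polynomial $g=\sum\lambda_{\mathbf a}t^{\mathbf a}$, $\nu(g)=\min_{>_{\mathrm{grlex}}}\{\mathbf a\mid\lambda_{\mathbf a}\neq0\}$, extended to rational functions by $\nu(g/h)=\nu(g)-\nu(h)$; $\nu^b_{\mathfrak C_{\mathrm{right}}}$ is the resulting valuation on $\mathbb K(\mathrm{Gr}_{d,n})$. The coordinate $a_{k,j}$ in the claim is the exponent of the variable attached to the entry $\alpha_{k+j-1}$ of the $k$-th block. *)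

(* Defs.v *)
From HB Require Import structures.
From mathcomp Require Import all_boot all_order all_algebra.
From mathcomp Require Import mpoly.
Set Implicit Arguments. Unset Strict Implicit. Unset Printing Implicit Defensive.
Import Order.TTheory GRing.Theory.
Local Open Scope ring_scope.

(* Conventions (all 0-based internally):
   - r = d*(n-d); the polynomial ring K[t_1..t_r] is {mpoly K[r]}, the
     variable t_s being 'X_(s-1).
   - block k (1-based) = k0+1, entry j (1-based) = j0+1 : the factor
     exp(t f_{k+j-1}) uses the variable t_{(d-k)(n-d)+j}, i.e. mpoly index
     (d-1-k0)*(n-d)+j0.  This is exactly the labelling (t_r,...,t_1) of the
     sequence (alpha_{l_r},...,alpha_{l_1}) read from left to right. *)

Section Defs.
Variable K : fieldType.
Variables d n : nat.

Definition rk := (d * (n - d))%N.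

(* the variable with 0-based index i (0 if out of range; never happens) *)
Definition tvar (i : nat) : {mpoly K[rk]} :=
  match @insub _ (fun j => j < rk)%N _ i with
  | Some x => 'X_x
  | None => 0
  end.

(* fmat l = f_{l+1} = E_{l+2,l+1} (1-based indices), i.e. 0-based row l+1, column l;
   expf t l = exp(t f_{l+1}) = 1 + t f_{l+1} since f^2 = 0 *)

Definition fmat (l : nat) : 'M[{mpoly K[rk]}]_n :=
  \matrix_(a, b) ((a == l.+1 :> nat) && (b == l :> nat))%:R.

Definition expf (t : {mpoly K[rk]}) (l : nat) : 'M[{mpoly K[rk]}]_n :=
  1%:M + t *: fmat l.

(* list of factors, left to right:
   block k0 = 0..d-1, inside a block j0 = n-d-1 down to 0;
   the simple root index (0-based) of alpha_{k+j-1} is k0+j0. *)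
Definition factors : seq ('M[{mpoly K[rk]}]_n) :=
  [seq expf (tvar ((d.-1 - k0) * (n - d) + j0)) (k0 + j0)
     | k0 <- iota 0 d, j0 <- rev (iota 0 (n - d))].

Definition mmat : 'M[{mpoly K[rk]}]_n := foldr mulmx 1%:M factors.

(* Plucker coordinate P_j of g . e_{1..d}: coefficient of e_{j_1}/\../\e_{j_d}
   in g e_1 /\ ... /\ g e_d, i.e. the minor on rows j, columns 1..d. *)
Definition plucker (h : (d <= n)%N) (jj : 'I_d -> 'I_n)
  (M : 'M[{mpoly K[rk]}]_n) : {mpoly K[rk]} :=
  \det (\matrix_(a < d, b < d) M (jj a) (widen_ord h b)).

End Defs.

(* graded reverse-index lexicographic order: total degree, then a_r, a_{r-1},... *)
Fixpoint lexle (s t : seq nat) : bool :=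
  match s, t with
  | x :: s', y :: t' => (x < y)%N || ((x == y) && lexle s' t')
  | _, _ => true
  end.

Definition revexps (r : nat) (m : 'X_{1..r}) : seq nat :=
  [seq m i | i <- rev (enum 'I_r)].

Definition grlex_le (r : nat) (a b : 'X_{1..r}) : bool :=
  (mdeg a < mdeg b)%N || ((mdeg a == mdeg b) && lexle (revexps a) (revexps b)).

Definition is_nu (K : fieldType) (r : nat) (g : {mpoly K[r]}) (a : 'X_{1..r}) : bool :=
  (a \in msupp g) && all (grlex_le a) (msupp g).

(* nu(g/h) = nu(g) - nu(h) = v, as an integer vector indexed by the variable
   index (coordinate i = exponent of t_{i+1}). *)
Definition nu_ratio (K : fieldType) (r : nat) (g h : {mpoly K[r]}) (v : 'I_r -> int) : Prop :=
  exists a b, [/\ is_nu g a, is_nu h b & forall i, v i = (a i)%:Z - (b i)%:Z].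

(* expected valuation: coordinate with index i corresponds to (k0, j0) with
   i = (d-1-k0)*(n-d) + j0; it is 1 iff j = j0+1 <= j_k - k, where
   j_k = jj k0 + 1 and k = k0 + 1. *)
Definition expected (d n : nat) (jj : 'I_d -> 'I_n) (i : 'I_(rk d n)) : int :=
  let k0 := (d.-1 - i %/ (n - d))%N in
  let j0 := (i %% (n - d))%N in
  match @insub _ (fun k => k < d)%N _ k0 with
  | Some k => if (j0 < jj k - k0)%N then 1 else 0
  | None => 0
  end.

(* Main.v *)
Require Import Defs.
From HB Require Import structures.
From mathcomp Require Import all_boot all_order all_algebra.
From mathcomp Require Import mpoly.
From mathcomp Require Import fingroup perm.
From mathcomp Require Import zify ring.
Set Implicit Arguments. Unset Strict Implicit. Unset Printing Implicit Defensive.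
Import Order.TTheory GRing.Theory.
Local Open Scope ring_scope.

Section Main.
Variable K : fieldType.
Variables d n : nat.
Hypothesis hd : (0 < d)%N.
Hypothesis hdn : (d < n)%N.

Local Notation r := (rk d n).
Local Notation w := (n - d)%N.
Local Notation R := {mpoly K[r]}.
Local Notation MT := ('M[R]_n).

Definition ent (Z : MT) (a c : nat) : R :=
  if @insub _ (fun j => j < n)%N _ a is Some a' then
    if @insub _ (fun j => j < n)%N _ c is Some c' then Z a' c' else 0
  else 0.

Lemma entE (Z : MT) (a c : 'I_n) : ent Z a c = Z a c.
Proof. by rewrite /ent !valK. Qed.

Lemma ent_out (Z : MT) a c : (n <= a)%N || (n <= c)%N -> ent Z a c = 0.
Proof.
rewrite /ent; case: insubP => [a' _ <-|//]; case: insubP => [c' _ <-|//].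
by rewrite leqNgt ltn_ord /= leqNgt ltn_ord.
Qed.

Lemma ent_expf (Z : MT) t l a c : (l.+1 < n)%N ->
  ent (expf t l *m Z) a c = ent Z a c + (if a == l.+1 then t * ent Z l c else 0).
Proof.
move=> hl.
case: (ltnP a n) => ha; last first.
  rewrite (ent_out _ (a:=a)) ?ha // (ent_out _ (a:=a)) ?ha // add0r.
  by case: eqP => // hal; rewrite hal leqNgt hl in ha.
case: (ltnP c n) => hc; last first.
  by rewrite !ent_out ?hc ?orbT // add0r mulr0 if_same.
rewrite -[a]/(val (Ordinal ha)) -[c]/(val (Ordinal hc)) !entE.
rewrite /expf mulmxDl mul1mx -scalemxAl !mxE.
congr (_ + _).
have hl' : (l < n)%N by apply: ltnW.
rewrite (bigD1 (Ordinal hl')) //= big1 ?addr0; last first.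
  move=> j hj; rewrite mxE; case: (j == l :> nat) /eqP => [hjl|]; last by rewrite andbF mul0r.
  by exfalso; move/eqP: hj; apply; apply/val_inj.
rewrite mxE eqxx andbT /=; case: eqP => _; last by rewrite mul0r mulr0.
idtac.
rewrite mul1r; congr (_ * _); by rewrite -(entE Z (Ordinal hl') (Ordinal hc)).
Qed.


Definition tv (k j : nat) : R := tvar K d n ((d.-1 - k) * w + j).
Definition blkm (k m : nat) : seq MT :=
  [seq expf (tv k j0) (k + j0) | j0 <- rev (iota 0 m)].
Definition Nk (k : nat) : MT :=
  foldr mulmx 1%:M (flatten [seq blkm k0 w | k0 <- iota k (d - k)]).

Lemma mmatE : mmat K d n = Nk 0.
Proof. by rewrite /mmat /factors /Nk subn0. Qed.

Lemma Nkd : Nk d = 1%:M.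
Proof. by rewrite /Nk subnn. Qed.

Lemma NkS k : (k < d)%N -> Nk k = foldr mulmx (Nk k.+1) (blkm k w).
Proof.
move=> hk; rewrite /Nk -(subnSK hk) /= foldr_cat //.
Qed.

Lemma RR k X m a c : (k < d)%N -> (m <= w)%N ->
  let Z := foldr mulmx X (blkm k m) in
  ent Z a c = (if (k < a <= k + m)%N then tv k (a.-1 - k) * ent Z a.-1 c else 0)
              + ent X a c.
Proof.
move=> hk; elim: m => [|m IH] hm /=.
  by rewrite addn0 /blkm /=; case: (k < a <= k)%N /andP => [[h1 h2]|]; [lia|rewrite add0r].
have -> : blkm k m.+1 = expf (tv k m) (k + m) :: blkm k m.
  by rewrite /blkm -addn1 iotaD rev_cat /=.
have hl : ((k + m).+1 < n)%N by lia.
rewrite /= !ent_expf //.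
have IH' := IH (ltnW hm).
set Z := foldr _ _ _ in IH' *.
rewrite IH'.
case: (eqVneq a (k + m).+1) => [->|hne].
  have -> : (k < (k + m).+1 <= k + m)%N = false by lia.
  have -> : (k < (k + m).+1 <= k + m.+1)%N = true by lia.
  have -> : ((k + m).+1.-1 == (k + m).+1) = false by lia.
  rewrite add0r addr0 addrC; congr (_ + _).
  have -> : ((k + m).+1.-1 - k)%N = m by lia.
  by congr (_ * _).
rewrite addr0.
case: ifP => h1; case: ifP => h2; try lia.
- rewrite ifF; last by apply/negbTE; lia.
  by rewrite addr0.
- by [].
Qed.


Lemma RRN k a c : (k < d)%N ->
  ent (Nk k) a c = (if (k < a <= k + w)%N then tv k (a.-1 - k) * ent (Nk k) a.-1 c else 0)
              + ent (Nk k.+1) a c.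
Proof. by move=> hk; rewrite NkS //; apply: RR. Qed.

Definition sP (Q : 'X_{1..r} -> Prop) (p : R) := forall m, m \in msupp p -> Q m.

Lemma sP0 Q : sP Q 0.
Proof. by move=> m; rewrite msupp0. Qed.

Lemma sPD Q p q : sP Q p -> sP Q q -> sP Q (p + q).
Proof. by move=> hp hq m /msuppD_le; rewrite mem_cat => /orP[/hp|/hq]. Qed.

Lemma sPN Q p : sP Q p -> sP Q (- p).
Proof. by move=> hp m; rewrite (perm_mem (msuppN _)) => /hp. Qed.

Lemma sPB Q p q : sP Q p -> sP Q q -> sP Q (p - q).
Proof. by move=> hp hq; apply: sPD => //; apply: sPN. Qed.

Lemma sP_sum Q (I : Type) (s : seq I) (P : pred I) (F : I -> R) :
  (forall i, P i -> sP Q (F i)) -> sP Q (\sum_(i <- s | P i) F i).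
Proof. move=> h; apply: (big_ind (sP Q)) => //; [exact: sP0|exact: sPD]. Qed.

Lemma sPM (Q1 Q2 Q3 : 'X_{1..r} -> Prop) p q :
  (forall m1 m2, Q1 m1 -> Q2 m2 -> Q3 (m1 + m2)%MM) ->
  sP Q1 p -> sP Q2 q -> sP Q3 (p * q).
Proof.
move=> hQ hp hq m /msuppM_le /allpairsP [[m1 m2] /= [h1 h2 ->]].
by apply: hQ; [apply: hp|apply: hq].
Qed.

Lemma sPX Q m : Q m -> sP Q 'X_[m].
Proof. by move=> h m'; rewrite msuppX mem_seq1 => /eqP ->. Qed.

Lemma sP1 Q : Q 0%MM -> sP Q 1.
Proof. by move=> h m'; rewrite msupp1 mem_seq1 => /eqP ->. Qed.

Lemma sPsign Q (b : bool) : Q 0%MM -> sP Q ((-1) ^+ b).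
Proof. by move=> h; case: b; rewrite ?expr1 ?expr0; [apply: sPN|]; apply: sP1. Qed.

Lemma sPnat Q (b : bool) : Q 0%MM -> sP Q (b%:R).
Proof. by move=> h; case: b; [apply: sP1|apply: sP0]. Qed.

Definition bk (i : nat) := (d.-1 - i %/ w)%N.
Definition low (b : nat) (m : 'X_{1..r}) := forall i : 'I_r, (bk i < b)%N -> m i = 0%N.
Definition homd (D : int) (m : 'X_{1..r}) := (mdeg m)%:Z = D.
Definition hasb (k : nat) (m : 'X_{1..r}) :=
  exists i : 'I_r, (bk i == k) && (0 < m i)%N.

Lemma low0 b : low b 0%MM.
Proof. by move=> i _; rewrite mnm0E. Qed.

Lemma lowD b m1 m2 : low b m1 -> low b m2 -> low b (m1 + m2)%MM.
Proof. by move=> h1 h2 i hi; rewrite mnmDE h1 // h2. Qed.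

Lemma homdD D1 D2 m1 m2 : homd D1 m1 -> homd D2 m2 -> homd (D1 + D2) (m1 + m2)%MM.
Proof. by rewrite /homd mdegD => <- <-; rewrite PoszD. Qed.

Lemma hasbDl k m1 m2 : hasb k m1 -> hasb k (m1 + m2)%MM.
Proof.
by case=> i /andP[h1 h2]; exists i; rewrite h1 mnmDE (leq_trans h2) ?leq_addr.
Qed.

Lemma hasbDr k m1 m2 : hasb k m2 -> hasb k (m1 + m2)%MM.
Proof. by rewrite addmC; apply: hasbDl. Qed.

Lemma sP_low_prod b (I : Type) (s : seq I) (F : I -> R) :
  (forall i, sP (low b) (F i)) -> sP (low b) (\prod_(i <- s) F i).
Proof.
move=> h; apply: (big_ind (sP (low b))) => //; first by apply: sP1; apply: low0.
by move=> x y; apply: (sPM (@lowD b)).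
Qed.

Lemma det_low b m (A : 'M[R]_m) :
  (forall i j, sP (low b) (A i j)) -> sP (low b) (\det A).
Proof.
move=> h; rewrite /determinant; apply: sP_sum => s _.
apply: (sPM (@lowD b)); first by apply: sPsign; apply: low0.
by apply: sP_low_prod.
Qed.

Lemma sP_homd_prod (I : Type) (s : seq I) (F : I -> R) (D : I -> int) :
  (forall i, sP (homd (D i)) (F i)) -> sP (homd (\sum_(i <- s) D i)) (\prod_(i <- s) F i).
Proof.
move=> h; elim: s => [|x s IH]; first by rewrite !big_nil; apply: sP1; rewrite /homd mdeg0.
by rewrite !big_cons; apply: (sPM (@homdD _ _)).
Qed.

Lemma det_homd m (A : 'M[R]_m) (x y : 'I_m -> int) :
  (forall i j, sP (homd (x i - y j)) (A i j)) ->
  sP (homd (\sum_i x i - \sum_i y i)) (\det A).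
Proof.
move=> h; rewrite /determinant; apply: sP_sum => s _.
have -> : \sum_i x i - \sum_i y i = 0 + \sum_i (x i - y ((s : 'S_m) i)).
  by rewrite add0r sumrB; congr (_ - _); apply: (reindex_perm s).
apply: (sPM (@homdD 0 (\sum_i (x i - y ((s : 'S_m) i))))).
  by apply: sPsign; rewrite /homd mdeg0.
by apply: sP_homd_prod.
Qed.

Lemma sP_hasb_prod_diff k (I : Type) (s : seq I) (F G : I -> R) :
  (forall i, sP (hasb k) (F i - G i)) ->
  sP (hasb k) (\prod_(i <- s) F i - \prod_(i <- s) G i).
Proof.
move=> h; elim: s => [|x s IH]; first by rewrite !big_nil subrr; apply: sP0.
rewrite !big_cons.
have -> : F x * \prod_(j <- s) F j - G x * \prod_(j <- s) G j =
   F x * (\prod_(j <- s) F j - \prod_(j <- s) G j) + (F x - G x) * \prod_(j <- s) G j.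
  by rewrite mulrBr mulrBl addrA subrK.
apply: sPD.
  apply: (sPM (Q1 := fun _ => True) (Q2 := hasb k)) => //.
  by move=> ? ? _; apply: hasbDr.
apply: (sPM (Q1 := hasb k) (Q2 := fun _ => True)) => //.
by move=> ? ? h1 _; apply: hasbDl.
Qed.

Lemma det_hasb k m (A B : 'M[R]_m) :
  (forall i j, sP (hasb k) (A i j - B i j)) -> sP (hasb k) (\det A - \det B).
Proof.
move=> h; rewrite /determinant -sumrB; apply: sP_sum => s _.
rewrite -mulrBr.
apply: (sPM (Q1 := fun _ => True) (Q2 := hasb k)) => //.
  by move=> ? ? _; apply: hasbDr.
exact: sP_hasb_prod_diff.
Qed.


Definition idx (k j : nat) := ((d.-1 - k) * w + j)%N.

Lemma w_gt0 : (0 < w)%N.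
Proof. lia. Qed.

Lemma idx_ltr k j : (k < d)%N -> (j < w)%N -> (idx k j < r)%N.
Proof.
move=> hk hj; rewrite /idx /rk.
have -> : d = (d.-1 - k).+1 + k by lia.
rewrite mulnDl mulSn; nia.
Qed.

Lemma idx_div k j : (j < w)%N -> (idx k j %/ w = d.-1 - k)%N.
Proof. by move=> hj; rewrite /idx divnMDl ?w_gt0 // divn_small // addn0. Qed.

Lemma idx_mod k j : (j < w)%N -> (idx k j %% w = j)%N.
Proof. by move=> hj; rewrite /idx modnMDl modn_small. Qed.

Lemma bk_lt (i : 'I_r) : (i %/ w < d)%N.
Proof. by rewrite ltn_divLR ?w_gt0 // mulnC; apply: ltn_ord. Qed.

Lemma idx_eq k j (i : 'I_r) : (k < d)%N -> (j < w)%N ->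
  ((i : nat) == idx k j) = (bk i == k) && (i %% w == j)%N.
Proof.
move=> hk hj; apply/eqP/andP => [->|[/eqP h1 /eqP h2]].
  by rewrite /bk idx_div // idx_mod //; split=> //; apply/eqP; lia.
rewrite (divn_eq i w) h2 /idx; congr (_ * _ + _)%N.
have := bk_lt i; rewrite /bk in h1; lia.
Qed.

Lemma tvE k j : (k < d)%N -> (j < w)%N ->
  exists i : 'I_r, [/\ bk i = k, (i %% w = j)%N & tv k j = 'X_[U_(i)]].
Proof.
move=> hk hj; rewrite /tv /tvar; case: insubP => [u _ eu|hn].
  exists u; split => //.
    by rewrite /bk eu idx_div //; lia.
  by rewrite eu idx_mod.
by exfalso; move/negP: hn; apply; apply: (idx_ltr hk hj).
Qed.

Lemma tv_low k0 k j : (k0 < d)%N -> (j < w)%N -> (k <= k0)%N -> sP (low k) (tv k0 j).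
Proof.
move=> hk hj hkk; have [i [h1 _ ->]] := tvE hk hj.
apply: sPX => i' hi'; rewrite mnm1E; case: eqP => // e; subst i'; lia.
Qed.

Lemma tv_homd k j : (k < d)%N -> (j < w)%N -> sP (homd 1) (tv k j).
Proof. by move=> hk hj; have [i [_ _ ->]] := tvE hk hj; apply: sPX; rewrite /homd mdeg1. Qed.

Lemma tv_hasb k j : (k < d)%N -> (j < w)%N -> sP (hasb k) (tv k j).
Proof.
move=> hk hj; have [i [h1 _ ->]] := tvE hk hj.
by apply: sPX; exists i; rewrite mnm1E eqxx h1 eqxx.
Qed.

Definition Inv (b lmin : nat) (Z : MT) := forall a c,
  [/\ (a < c)%N -> ent Z a c = 0,
      sP (low b) (ent Z a c),
      sP (homd (Posz a - Posz c)) (ent Z a c)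
    & (c < lmin)%N -> ent Z a c = (a == c)%:R ].

Lemma ent1 a c : ent 1%:M a c = ((a == c) && (a < n)%N)%:R.
Proof.
case: (ltnP a n) => ha; last by rewrite ent_out ?ha // andbF.
case: (ltnP c n) => hc; last first.
  rewrite ent_out ?hc ?orbT // andbT; case: eqP => // e; lia.
rewrite -[a]/(val (Ordinal ha)) -[c]/(val (Ordinal hc)) entE mxE /= andbT.
by [].
Qed.

Lemma Inv1 b l : (l <= n)%N -> Inv b l 1%:M.
Proof.
move=> hl a c; rewrite ent1; split.
- by move=> h; case: eqP => // e; lia.
- by apply: sPnat; apply: low0.
- case: eqP => [->|_] /=; last exact: sP0.
  by apply: sPnat; rewrite /homd mdeg0 subrr.
- move=> hc; case: eqP => //= ->; have -> : (c < n)%N = true by lia. by [].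
Qed.

Lemma Inv_weak b l b' l' Z : Inv b l Z -> (b' <= b)%N -> (l' <= l)%N -> Inv b' l' Z.
Proof.
move=> h hb hl a c; have [h1 h2 h3 h4] := h a c; split => //.
- by move=> m /h2 hm i hi; apply: hm; apply: leq_trans hb.
- by move=> hc; apply: h4; apply: leq_trans hl.
Qed.

Lemma Inv_expf b lmin Z t l : Inv b lmin Z -> sP (low b) t -> sP (homd 1) t ->
  (lmin <= l)%N -> (l.+1 < n)%N -> Inv b lmin (expf t l *m Z).
Proof.
move=> hZ hlt hht hl hln a c; rewrite ent_expf //.
have [h1 h2 h3 h4] := hZ a c; have [g1 g2 g3 g4] := hZ l c.
split.
- move=> hac; rewrite h1 // add0r; case: eqP => // e; rewrite g1 ?mulr0 //; lia.
- apply: sPD => //; case: eqP => _; last exact: sP0.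
  by apply: (sPM (@lowD b)).
- apply: sPD => //; case: eqP => e; last exact: sP0.
  have -> : Posz a - Posz c = 1 + (Posz l - Posz c) by rewrite e; lia.
  by apply: (sPM (@homdD _ _)).
- move=> hc; rewrite h4 // g4 //; have -> : (l == c) = false by lia.
  by rewrite mulr0 if_same addr0.
Qed.

Lemma Inv_blk k m X : (k < d)%N -> (m <= w)%N -> Inv k k X ->
  Inv k k (foldr mulmx X (blkm k m)).
Proof.
move=> hk; elim: m => [|m IH] hm hX //.
have -> : blkm k m.+1 = expf (tv k m) (k + m) :: blkm k m.
  by rewrite /blkm -addn1 iotaD rev_cat /=.
rewrite /=; apply: Inv_expf.
- by apply: IH => //; apply: ltnW.
- by apply: tv_low.
- by apply: tv_homd.
- by apply: leq_addr.
- lia.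
Qed.

Lemma Inv_Nk k : (k <= d)%N -> Inv k k (Nk k).
Proof.
move=> hk; move: {2}(d - k)%N (erefl (d - k)%N) => m.
elim: m k hk => [|m IH] k hk e.
  have -> : k = d by lia.
  by rewrite Nkd; apply: Inv1; apply: ltnW.
have hk' : (k < d)%N by lia.
rewrite NkS //; apply: Inv_blk => //.
by apply: (Inv_weak (IH k.+1 hk' _)); lia.
Qed.


Definition mu (k p : nat) : 'X_{1..r} :=
  [multinom ((bk i == k) && (i %% w < p)%N : nat) | i < r].

Lemma ord_eq_bk (i i' : 'I_r) : (i == i') = (bk i == bk i') && (i %% w == i' %% w)%N.
Proof.
apply/eqP/andP => [->//|[/eqP h1 /eqP h2]]; apply: val_inj => /=.
rewrite (divn_eq i w) (divn_eq i' w) h2; congr (_ * _ + _)%N.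
have := bk_lt i; have := bk_lt i'; rewrite /bk in h1; lia.
Qed.

Lemma tv_mu k p : (k < d)%N -> (p < w)%N -> tv k p * 'X_[mu k p] = 'X_[mu k p.+1].
Proof.
move=> hk hp; have [i [h1 h2 ->]] := tvE hk hp; rewrite -mpolyXD; congr 'X_[_].
apply/mnmP => i'; rewrite mnmDE mnm1E !mnmE ord_eq_bk h1 h2.
case: eqP => [<-|] /=; first by case: eqP => [->|]; rewrite ?ltnSn ?ltnn //=; lia.
by move=> ne; rewrite add0n; case: eqP => // e; exfalso; apply: ne.
Qed.

Lemma mu0 k : mu k 0 = 0%MM.
Proof. by apply/mnmP => i; rewrite mnmE mnm0E ltn0 andbF. Qed.

Lemma colk k a : (k < d)%N ->
  ent (Nk k) a k = if (k <= a <= k + w)%N then 'X_[mu k (a - k)] else 0.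
Proof.
move=> hk; have hI := Inv_Nk hk.
elim: a => [|a IH].
  rewrite RRN // ltn0 /= add0r; have [_ _ _ ->] := hI 0%N k; last by [].
  case: eqP => [<-|ne] /=; last by rewrite leqn0; case: eqP => //; move/esym.
  by rewrite sub0n mu0 mpolyX0.
rewrite RRN //; have [_ _ _ ->] := hI a.+1 k; last by [].
case: (boolP (k < a.+1 <= k + w)%N) => h.
  rewrite IH ifT; last lia.
  rewrite ifT; last lia.
  have -> : (a.+1 == k) = false by lia.
  rewrite addr0 /=.
  have -> : (a.+1 - k = (a - k).+1)%N by lia.
  by rewrite -tv_mu; [|by []|lia].
rewrite add0r; case: eqP => [<-|ne] /=.
  by rewrite leqnn leq_addr subnn mu0 mpolyX0.
by rewrite ifF //; lia.
Qed.

Lemma colk_split k b a : (k < d)%N -> (k <= b <= k + w)%N -> (b < a)%N ->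
  exists v, ent (Nk k) a k = 'X_[mu k (b - k)] * v /\ sP (hasb k) v.
Proof.
move=> hk hb hba; rewrite colk //.
case: ifP => ha; last by exists 0; rewrite mulr0; split => //; apply: sP0.
exists 'X_[mu k (a - k) - mu k (b - k)]; split.
  rewrite -mpolyXD; congr 'X_[_]; apply/mnmP => i.
  rewrite mnmDE mnmBE !mnmE; case: (bk i == k) => //=.
  case: (ltnP (i %% w) (b - k)) => h1 /=; first by have -> : (i %% w < a - k)%N = true by lia.
  by rewrite add0n subn0.
have hbw : (b - k < w)%N by lia.
apply: sPX; have [i [h1 h2 _]] := tvE hk hbw.
exists i; rewrite h1 eqxx mnmBE !mnmE h1 eqxx h2 /= ltnn subn0.
by have -> : (b - k < a - k)%N = true by lia.
Qed.


Lemma lexle_add (s : seq 'I_r) (u a b : 'X_{1..r}) :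
  lexle [seq (u + a)%MM i | i <- s] [seq (u + b)%MM i | i <- s] =
  lexle [seq a i | i <- s] [seq b i | i <- s].
Proof.
elim: s => [|x s IH] //=; rewrite !mnmDE ltn_add2l eqn_add2l IH //.
Qed.

Lemma grlex_add (u a b : 'X_{1..r}) : grlex_le (u + a)%MM (u + b)%MM = grlex_le a b.
Proof. by rewrite /grlex_le /revexps !mdegD ltn_add2l eqn_add2l lexle_add. Qed.

Lemma lexle_first (s : seq 'I_r) (a b : 'X_{1..r}) (i : 'I_r) :
  sorted (fun x y : 'I_r => (y < x)%N) s -> i \in s -> (a i < b i)%N ->
  (forall j : 'I_r, (i < j)%N -> a j = b j) ->
  lexle [seq a x | x <- s] [seq b x | x <- s].
Proof.
move=> hs his hab hj; elim: s hs his => [|x s IH] //= hs.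
rewrite in_cons => /orP [/eqP <-|his]; first by rewrite hab.
have hall : all (fun y : 'I_r => (y < x)%N) s.
  apply: (order_path_min (leT := fun x y : 'I_r => (y < x)%N)) => //.
  by move=> u v t h1 h2; apply: ltn_trans h2 h1.
have hix : (i < x)%N by move/allP: hall; apply.
rewrite hj // ltnn eqxx /=; apply: IH => //.
exact: (path_sorted hs).
Qed.

Lemma sorted_rev_enum : sorted (fun x y : 'I_r => (y < x)%N) (rev (enum 'I_r)).
Proof.
rewrite rev_sorted.
have := iota_ltn_sorted 0 r; rewrite -val_enum_ord sorted_map.
by [].
Qed.

Lemma bk_mono (i j : 'I_r) : (i <= j)%N -> (bk j <= bk i)%N.
Proof. by move=> h; rewrite /bk leq_sub2l // leq_div2r. Qed.

Lemma lex_block k (a b : 'X_{1..r}) (i0 : 'I_r) :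
  bk i0 = k -> (a i0 < b i0)%N -> low k a -> low k b ->
  (forall i : 'I_r, bk i = k -> (a i <= b i)%N) ->
  lexle (revexps a) (revexps b).
Proof.
move=> h0 hab la lb hle.
have P0 : a i0 != b i0 by rewrite neq_ltn hab.
have [i Pi imax] := @arg_maxnP 'I_r i0 (fun j => a j != b j) (fun j => nat_of_ord j) P0.
have hi0 : (i0 <= i)%N by apply: imax.
have hbk : bk i = k.
  have := bk_mono hi0; rewrite h0 leq_eqVlt => /orP [/eqP //|hlt].
  by move: Pi; rewrite la // lb.
apply: (@lexle_first _ _ _ i).
- exact: sorted_rev_enum.
- by rewrite mem_rev mem_enum.
- by rewrite ltn_neqAle Pi hle.
- move=> j hj; apply/eqP; apply/negP => /negP hne.
  have := imax j hne; rewrite /= => h; lia.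
Qed.


Lemma step_nu k (P' E : R) (mu0 a' : 'X_{1..r}) (D : int) :
  is_nu P' a' -> sP (low k.+1) P' -> sP (hasb k) E ->
  sP (low k) ((P' + E) * 'X_[mu0]) -> sP (homd D) ((P' + E) * 'X_[mu0]) ->
  is_nu ((P' + E) * 'X_[mu0]) (mu0 + a')%MM.
Proof.
move=> /andP [ha' hall] H2 H3 H4 H5.
have a'0 : forall i : 'I_r, bk i = k -> a' i = 0%N.
  by move=> i hi; apply: (H2 a' ha'); rewrite hi.
have Ea' : E@_a' = 0.
  apply: memN_msupp_eq0; apply/negP => /H3 [i /andP[/eqP hbi hpos]].
  by rewrite a'0 in hpos.
have hmem : (mu0 + a')%MM \in msupp ((P' + E) * 'X_[mu0]).
  by rewrite mcoeff_msupp mcoeffMX mcoeffD Ea' addr0 -mcoeff_msupp.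
rewrite /is_nu hmem /=; apply/allP => b hb.
have hb0 := hb.
move: hb; rewrite (perm_mem (msuppMX _ _)) => /mapP [b' hb' eb].
move: hb' => /msuppD_le; rewrite mem_cat => /orP [hb'|hb'].
  by rewrite eb grlex_add; apply: (allP hall).
have hdeg : mdeg (mu0 + a')%MM = mdeg b.
  by have := H5 _ hmem; have := H5 _ hb0; rewrite /homd => <- [].
rewrite /grlex_le hdeg ltnn eqxx /=.
have [i0 /andP[/eqP h0 hpos]] := H3 b' hb'.
rewrite eb in hb0 *.
apply: (@lex_block k _ _ i0) => //.
- by rewrite !mnmDE a'0 // ltn_add2l.
- exact: H4.
- exact: H4.
- by move=> i hi; rewrite !mnmDE a'0 // leq_add2l.
Qed.


Definition ex (k : nat) (J : nat -> nat) (i : nat) : nat :=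
  if (k <= bk i)%N && (i %% w < J (bk i) - bk i)%N then 1%N else 0%N.
Definition emon k J : 'X_{1..r} := [multinom ex k J i | i < r].

Lemma emonS k J : (k < d)%N -> emon k J = (mu k (J k - k) + emon k.+1 J)%MM.
Proof.
move=> hk; apply/mnmP => i; rewrite mnmDE !mnmE /ex.
move: (bk i) => q.
case: (ltngtP q k) => h.
- by [].
- by rewrite /= add0n.
- by rewrite h /= addn0; case: ifP.
Qed.

Lemma emon_d J : emon d J = 0%MM.
Proof.
apply/mnmP => i; rewrite mnmE mnm0E /ex; have -> : (d <= bk i)%N = false by rewrite /bk; move: (i %/ w)%N => q; lia. by [].
Qed.

Lemma lexle_refl s : lexle s s.
Proof. by elim: s => //= x s ->; rewrite ltnn eqxx. Qed.

Lemma is_nu1 : is_nu (1 : R) 0%MM.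
Proof.
rewrite /is_nu msupp1 inE eqxx /= andbT /grlex_le ltnn eqxx /=.
exact: lexle_refl.
Qed.

Lemma main (J : nat -> nat) m :
  (forall k0, (k0 < d)%N -> (k0 <= J k0 <= k0 + w)%N) ->
  (forall k0 k1, (k0 < k1)%N -> (k1 < d)%N -> (J k0 < J k1)%N) -> (m <= d)%N ->
  is_nu (\det (\matrix_(i < m, c < m) ent (Nk (d - m)%N) (J (d - m + i)%N) (d - m + c)%N))
        (emon (d - m)%N J).
Proof.
move=> hJ1 hJ2; elim: m => [|m IH] hm.
  by rewrite det_mx00 subn0 emon_d; apply: is_nu1.
have hk : (d - m.+1 < d)%N by lia.
move: IH; have -> : (d - m = (d - m.+1).+1)%N by lia.
move=> /(_ (ltnW hm)); move: hk.
set k := (d - m.+1)%N => hk IH.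
set A := \matrix_(i < m.+1, c < m.+1) ent (Nk k) (J (k + i)%N) (k + c)%N.
set A' := \matrix_(i < m, c < m) ent (Nk k.+1) (J (k.+1 + i)%N) (k.+1 + c)%N.
set B := \matrix_(i < m, c < m) ent (Nk k) (J (k.+1 + i)%N) (k.+1 + c)%N.
set mu0 := mu k (J k - k).
have hJk := hJ1 k hk.
have hA00 : A ord0 ord0 = 'X_[mu0] by rewrite mxE /= !addn0 colk // hJk.
have hcof : cofactor A ord0 ord0 = \det B.
  rewrite /cofactor /= expr0 mul1r; congr (\det _); apply/matrixP => i c.
  by rewrite !mxE /= /bump /= !add1n !addnS.
have [V [hV hVb]] : exists V, \sum_(i < m) A (lift ord0 i) ord0 * cofactor A (lift ord0 i) ord0
    = 'X_[mu0] * V /\ sP (hasb k) V.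
  apply: (big_ind (fun p => exists v, p = 'X_[mu0] * v /\ sP (hasb k) v)).
  - by exists 0; rewrite mulr0; split => //; apply: sP0.
  - move=> p q [v1 [-> h1]] [v2 [-> h2]]; exists (v1 + v2).
    by rewrite mulrDr; split => //; apply: sPD.
  - move=> j _; rewrite mxE /= /bump /= add1n addn0.
    have hlt : (J k < J (k + j.+1))%N by apply: hJ2; have := ltn_ord j; lia.
    have [v [hv hvb]] := @colk_split k (J k) (J (k + j.+1)%N) hk hJk hlt.
    exists (v * cofactor A (lift ord0 j) ord0); rewrite hv -mulrA; split => //.
    apply: (sPM (Q1 := hasb k) (Q2 := fun _ => True)) => //.
    by move=> ? ? h _; apply: hasbDl.
set E := (\det B - \det A') + V.
have hA : \det A = (\det A' + E) * 'X_[mu0].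
  rewrite (expand_det_col _ ord0) big_ord_recl hA00 hcof hV /E.
  by rewrite -mulrDr [RHS]mulrC; congr (_ * _); rewrite addrA [\det A' + _]addrC subrK.
have hI := Inv_Nk (ltnW hk); have hI' := Inv_Nk hk.
rewrite emonS // hA; apply: (step_nu (k := k) (D := \sum_(i < m.+1) Posz (J (k + i)) - \sum_(i < m.+1) Posz (k + i))).
- exact: IH.
- by apply: det_low => i c; rewrite mxE; have [] := hI' (J (k.+1 + i)) (k.+1 + c).
- apply: sPD => //; apply: det_hasb => i c; rewrite !mxE RRN // addrK.
  case: ifP => h; last exact: sP0.
  apply: (sPM (Q1 := hasb k) (Q2 := fun _ => True)) => //.
    by move=> ? ? h1 _; apply: hasbDl.
  by apply: tv_hasb => //; lia.
- by rewrite -hA; apply: det_low => i c; rewrite mxE; have [] := hI (J (k + i)) (k + c).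
- rewrite -hA; apply: (det_homd (x := fun i => Posz (J (k + i))) (y := fun c => Posz (k + c))).
  by move=> i c; rewrite mxE; have [] := hI (J (k + i)) (k + c).
Qed.

End Main.

Lemma J_bounds d n (J : nat -> nat) : (0 < d)%N -> (d < n)%N ->
  (forall k0, (k0 < d)%N -> (J k0 < n)%N) ->
  (forall k0 k1, (k0 < k1)%N -> (k1 < d)%N -> (J k0 < J k1)%N) ->
  forall k0, (k0 < d)%N -> (k0 <= J k0 <= k0 + (n - d))%N.
Proof.
move=> hd hdn hn h2 k0 hk0; apply/andP; split.
  elim: k0 hk0 => [|k IH] hk //.
  by apply: leq_ltn_trans (IH (ltnW hk)) (h2 _ _ (ltnSn k) hk).
move: {2}(d.-1 - k0)%N (erefl (d.-1 - k0)%N) => t.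
elim: t k0 hk0 => [|t IH] k hk e.
  have -> : k = d.-1 by lia.
  have hd1 : (d.-1 < d)%N by lia.
  have := hn d.-1 hd1; lia.
have hk1 : (k.+1 < d)%N by lia.
have := IH k.+1 hk1 ltac:(lia); have := h2 k k.+1 (ltnSn k) hk1; lia.
Qed.

Theorem proposition4p4 (K : closedFieldType) (hK : [pchar K]%R =i pred0)
  (d n : nat) (hd : (1 <= d)%N) (hdn : (d < n)%N)
  (jj : 'I_d -> 'I_n) (hjj : forall a b : 'I_d, (a < b)%N -> (jj a < jj b)%N) :
  nu_ratio
    (plucker (ltnW hdn) jj (mmat K d n))
    (plucker (ltnW hdn) (widen_ord (ltnW hdn)) (mmat K d n))
    (expected jj).
Proof.
pose J := fun k0 : nat => if @insub _ (fun j => j < d)%N _ k0 is Some o then val (jj o) else 0%N.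
have Jval : forall o : 'I_d, J o = jj o by move=> o; rewrite /J valK.
have hJ2 : forall k0 k1, (k0 < k1)%N -> (k1 < d)%N -> (J k0 < J k1)%N.
  move=> k0 k1 h01 h1.
  rewrite -[k0]/(val (Ordinal (ltn_trans h01 h1))) -[k1]/(val (Ordinal h1)) !Jval.
  by apply: hjj.
have hJ1' : forall k0, (k0 < d)%N -> (k0 <= J k0 <= k0 + (n - d))%N.
  apply: J_bounds => // k0 hk0.
  by rewrite -[k0]/(val (Ordinal hk0)) Jval ltn_ord.
have hI2 : forall k0 k1, (k0 < k1)%N -> (k1 < d)%N -> (id k0 < id k1)%N by [].
have hI1 : forall k0, (k0 < d)%N -> (k0 <= id k0 <= k0 + (n - d))%N.
  by move=> k0 _; rewrite leqnn leq_addr.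
have N1 := @main K d n hd hdn J d hJ1' hJ2 (leqnn d).
have N2 := @main K d n hd hdn id d hI1 hI2 (leqnn d).
rewrite subnn in N1 N2.
exists (emon d n 0 J), (emon d n 0 id); split.
- rewrite /plucker mmatE.
  have -> : (\matrix_(a < d, b < d) Nk K d n 0 (jj a) (widen_ord (ltnW hdn) b)) =
     \matrix_(i < d, c < d) ent (Nk K d n 0) (J (0 + i)%N) (0 + c)%N.
    apply/matrixP => i c; rewrite !mxE !add0n Jval.
    by rewrite -[val c]/(val (widen_ord (ltnW hdn) c)) entE.
  exact: N1.
- rewrite /plucker mmatE.
  have -> : (\matrix_(a < d, b < d) Nk K d n 0 (widen_ord (ltnW hdn) a) (widen_ord (ltnW hdn) b)) =
     \matrix_(i < d, c < d) ent (Nk K d n 0) (id (0 + i)%N) (0 + c)%N.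
    apply/matrixP => i c; rewrite !mxE !add0n /=.
    by rewrite -[val c]/(val (widen_ord (ltnW hdn) c)) -[val i]/(val (widen_ord (ltnW hdn) i)) entE.
  exact: N2.
- move=> i; rewrite !mnmE /ex /expected /=.
  rewrite subnn ltn0 subr0.
  case: insubP => [u _ eu|hn]; last by exfalso; move: hn; move: (i %/ (n - d))%N => q; lia.
  by rewrite /bk -eu Jval /=; case: ifP.
Qed.
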